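(* Let $P$ be a poset and $\Delta^\varphi$ a nondegenerate simplex of $N(P)$. The space of filtered maps $\mathcal C^0_P(\|\Delta^\varphi\|_P,\|\Delta^\varphi\|_P)$ is contractible.
   Context: $\varphi_P:\|N(P)\|\to P$ sends a point $(\{q_0<\dots<q_m\},t)$, $t$ in the interior of $\Delta^m$, to $q_m$. For $\varphi:\Delta^n\hookrightarrow N(P)$, $\|\Delta^\varphi\|_P=(\|\Delta^n\|,\varphi_P\circ\|\varphi\|)$, a space over $P$ ($P$ with the Alexandrov topology). $\mathcal C^0_P(A,B)$ is the set of continuous maps $A\to B$ commuting with the maps to $P$, with the subspace topology of $\mathcal C^0(A,B)$ (in $\Delta$-generated spaces). *)

(* Defs.v *)
From HB Require Import structures.
From mathcomp Require Import all_boot all_order all_algebra.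
From mathcomp Require Import all_classical all_reals all_analysis.
Set Implicit Arguments. Unset Strict Implicit. Unset Printing Implicit Defensive.
Import Order.TTheory GRing.Theory Num.Theory.
Import numFieldTopology.Exports.
Local Open Scope classical_set_scope.
Local Open Scope ring_scope.

(* Geometric realization |Delta^n| of the standard n-simplex, as a subset of
   R^(n+1) (row vectors, with the usual (max-norm) topology). *)
Definition simplex (R : realType) (n : nat) : set 'rV[R]_n.+1 :=
  [set t | (forall i, 0 <= t ord0 i) /\ \sum_(i < n.+1) t ord0 i = 1].
Arguments simplex R n : clear implicits.

(* For a point t of |Delta^n|, the last vertex of the (unique) open face
   containing t: the largest index i with t_i > 0. *)
Definition lastv (R : realType) (n : nat) (t : 'rV[R]_n.+1) : 'I_n.+1 :=
  inord (\max_(i < n.+1 | 0 < t ord0 i) (i : nat)).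

(* A nondegenerate n-simplex phi : Delta^n -> N(P) is a strict chain
   q_0 < q_1 < ... < q_n in P. *)
Definition strict_chain d (P : porderType d) (n : nat) (q : 'I_n.+1 -> P) :=
  forall i j : 'I_n.+1, (i < j)%N -> (q i < q j)%O.

(* The structure map phi_P o ||phi|| : ||Delta^n|| -> P of ||Delta^phi||_P:
   a point in the interior of the face {i_0 < ... < i_m} goes to q_{i_m}. *)
Definition strat (R : realType) d (P : porderType d) (n : nat)
  (q : 'I_n.+1 -> P) (t : 'rV[R]_n.+1) : P := q (lastv t).

(* Elements of C^0_P(||Delta^phi||_P, ||Delta^phi||_P): maps of |Delta^n|
   into itself (represented by functions on R^(n+1), only their restriction
   to |Delta^n| matters) which are continuous and commute with the maps to P. *)
Definition filtered_map (R : realType) d (P : porderType d) (n : nat)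
  (q : 'I_n.+1 -> P) (f : 'rV[R]_n.+1 -> 'rV[R]_n.+1) : Prop :=
  [/\ {within simplex R n, continuous f},
      (forall t, simplex R n t -> simplex R n (f t)) &
      (forall t, simplex R n t -> strat q (f t) = strat q (t : 'rV[R]_n.+1))].

Definition eq_on_simplex (R : realType) (n : nat)
  (f g : 'rV[R]_n.+1 -> 'rV[R]_n.+1) : Prop :=
  forall t, simplex R n t -> f t = g t.

(* Contractibility of the space C^0_P(||Delta^phi||_P, ||Delta^phi||_P) in
   Delta-generated spaces: a homotopy H : C x [0,1] -> C from the identity to
   a constant map c, which is continuous for the Delta-generated topology of
   the product.  A map out of the Delta-ification of C x [0,1] is continuous
   iff its composite with every continuous singular simplex
   Delta^k -> C x [0,1] is continuous; by the exponential law (|Delta^n| is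
   compact Hausdorff), a map sigma : |Delta^k| -> C (compact-open topology)
   is continuous iff its adjoint |Delta^k| x |Delta^n| -> |Delta^n| is. *)
Definition filtered_maps_contractible (R : realType) d (P : porderType d)
  (n : nat) (q : 'I_n.+1 -> P) : Prop :=
  exists (H : ('rV[R]_n.+1 -> 'rV[R]_n.+1) -> R -> ('rV[R]_n.+1 -> 'rV[R]_n.+1))
         (c : 'rV[R]_n.+1 -> 'rV[R]_n.+1),
  filtered_map q c /\
  [/\ (* H is a well-defined map C x [0,1] -> C *)
      (forall f s, filtered_map q f -> 0 <= s <= 1 -> filtered_map q (H f s)),
      (forall f g s, filtered_map q f -> filtered_map q g -> 0 <= s <= 1 ->
         eq_on_simplex f g -> eq_on_simplex (H f s) (H g s)),
      (forall f, filtered_map q f -> eq_on_simplex (H f 0) f),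
      (forall f, filtered_map q f -> eq_on_simplex (H f 1) c) &
      (forall (k : nat) (sigma : 'rV[R]_k.+1 -> 'rV[R]_n.+1 -> 'rV[R]_n.+1)
              (tau : 'rV[R]_k.+1 -> R),
         (forall u, simplex R k u -> filtered_map q (sigma u)) ->
         (forall u, simplex R k u -> 0 <= tau u <= 1) ->
         {within simplex R k, continuous tau} ->
         {within simplex R k `*` simplex R n,
            continuous (fun ux : 'rV[R]_k.+1 * 'rV[R]_n.+1 => sigma ux.1 ux.2)} ->
         {within simplex R k `*` simplex R n,
            continuous (fun ux : 'rV[R]_k.+1 * 'rV[R]_n.+1 =>
                          H (sigma ux.1) (tau ux.1) ux.2)})].

(* Main.v *)
Require Import Defs.
From HB Require Import structures.
From mathcomp Require Import all_boot all_order all_algebra.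
From mathcomp Require Import all_classical all_reals all_analysis.
From mathcomp Require Import lra.
Import Order.TTheory GRing.Theory Num.Theory.
Import numFieldTopology.Exports.
Local Open Scope classical_set_scope.
Local Open Scope ring_scope.

Lemma comp_within (T S U : topologicalType) (A : set T) (B : set S) (g : T -> S) (h : S -> U):
  continuous g -> (forall x, A x -> B (g x)) -> {within B, continuous h} -> {within A, continuous (h \o g)}.
Proof.
move=> cg AB ch; apply/subspace_continuousP => x Ax.
move/subspace_continuousP: ch => /(_ _ (AB _ Ax)) ch.
apply: cvg_trans ch.
have : g @ within A (nbhs x) --> within B (nbhs (g x)).
  move=> P /=; rewrite /within /= => hP.
  have := cg x _ hP; rewrite nbhs_simpl /=.
  apply: filterS => z Bz Az; exact: Bz (AB _ Az).
move=> H P hP; exact: H _ hP.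
Qed.

Lemma fst_cont (T S : topologicalType) : continuous (@fst T S).
Proof. move=> x; exact: cvg_fst. Qed.

Lemma snd_cont (T S : topologicalType) : continuous (@snd T S).
Proof. move=> x; exact: cvg_snd. Qed.

Section L.
Variable R : realType.
Variable n : nat.

Lemma lastv_le (w : 'rV[R]_n.+1) i : 0 < w ord0 i -> (i <= lastv w)%N.
Proof.
move=> wi; rewrite /lastv inordK; first exact: leq_bigmax_cond.
rewrite ltnS; apply/bigmax_leqP => j _; exact: leq_ord j.
Qed.

Lemma lastvE (w : 'rV[R]_n.+1) m : 0 < w ord0 m ->
  (forall i, 0 < w ord0 i -> (i <= m)%N) -> lastv w = m.
Proof.
move=> wm hi; apply: val_inj => /=; rewrite /lastv inordK.
  apply/eqP; rewrite eqn_leq; apply/andP; split.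
    by apply/bigmax_leqP => j /hi.
  exact: leq_bigmax_cond.
rewrite ltnS; apply/bigmax_leqP => j _; exact: leq_ord j.
Qed.

Lemma lastv_pos (w : 'rV[R]_n.+1) : simplex R n w -> 0 < w ord0 (lastv w).
Proof.
move=> [w0 w1].
have [i wi] : exists i, 0 < w ord0 i.
  apply/not_existsP => hn.
  have : \sum_(i < n.+1) w ord0 i <= 0.
    apply: sumr_le0 => i _; rewrite leNgt; apply/negP => h; exact: (hn i).
  by rewrite w1 ler10.
have [j hj hmax] := @eq_bigmax_cond _ (fun i : 'I_n.+1 => 0 < w ord0 i) (fun i : 'I_n.+1 => (i : nat)) (introT (@card_gt0P _ _) (ex_intro _ i wi)).
have -> : lastv w = j by apply: val_inj => /=; rewrite /lastv hmax inordK.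
exact: hj.
Qed.

End L.
Arguments lastv_pos {R n w}.
Arguments lastv_le {R n}.
Arguments lastvE {R n}.

Definition Hh (R : realType) n (f : 'rV[R]_n.+1 -> 'rV[R]_n.+1) (s : R) :=
  fun t => (1 - s) *: f t + s *: t.
Arguments Hh {R n} f s t.

Theorem lemma2p18 (R : realType) (d : Order.disp_t) (P : porderType d)
  (n : nat) (q : 'I_n.+1 -> P) (hq : strict_chain q) :
  filtered_maps_contractible R q.
Proof.
have qinj : injective q.
  move=> i j e; case: (ltngtP i j) => h.
  - by have := hq _ _ h; rewrite e ltxx.
  - by have := hq _ _ h; rewrite e ltxx.
  - exact: val_inj.
have Hval : forall (f : 'rV[R]_n.+1 -> 'rV[R]_n.+1) (s : R) (t : 'rV[R]_n.+1) (i : 'I_n.+1), Hh f s t ord0 i = (1 - s) * f t ord0 i + s * t ord0 i.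
  by move=> f s t i; rewrite /Hh !mxE.
have idc : {within simplex R n, continuous (fun x : 'rV[R]_n.+1 => x)}.
  by apply: continuous_subspaceT => x; exact: cvg_id.
have Hcont : forall (f : 'rV[R]_n.+1 -> 'rV[R]_n.+1) (s : R), {within simplex R n, continuous f} ->
    {within simplex R n, continuous (Hh f s)}.
  move=> f s cf x; rewrite /from_subspace /Hh; apply: cvgD; apply: cvgZ.
  - exact: cvg_cst.
  - exact: cf.
  - exact: cvg_cst.
  - exact: idc x.
exists (@Hh R n), id; split.
  by split.
split.
- move=> f s [cf fS fstr] /andP[s0 s1]; split.
  + exact: Hcont.
  + move=> t tS; have [a0 a1] := fS t tS; have [b0 b1] := tS; split.
      by move=> i; rewrite Hval; apply: addr_ge0; apply: mulr_ge0 => //; lra.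
    under eq_bigr do rewrite Hval.
    by rewrite big_split /= -!mulr_sumr a1 b1; lra.
  + move=> t tS; have [a0 a1] := fS t tS; have [b0 b1] := tS.
    have el : lastv (f t) = lastv t by apply: qinj; exact: fstr t tS.
    rewrite /strat; congr q; apply: lastvE.
      rewrite Hval; have := lastv_pos (fS t tS); have := lastv_pos tS.
      rewrite el => p1 p2.
      have [sl|sg] := ltrP s 1.
        have : 0 < (1 - s) * f t ord0 (lastv t) by apply: mulr_gt0 => //; lra.
        have : 0 <= s * t ord0 (lastv t) by apply: mulr_ge0 => //; lra.
        lra.
      have -> : s = 1 by lra.
      by rewrite subrr mul0r add0r mul1r.
    move=> i; rewrite Hval => hp.
    have [ap|an] := ltrP 0 (f t ord0 i).
      by rewrite -el; apply: lastv_le.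
    have [bp|bn] := ltrP 0 (t ord0 i).
      exact: lastv_le.
    have ha : f t ord0 i = 0 by have := a0 i; lra.
    have hb : t ord0 i = 0 by have := b0 i; lra.
    by move: hp; rewrite ha hb !mulr0 addr0 ltxx.
- by move=> f g s _ _ _ e t tS; rewrite /Hh e.
- by move=> f _ t _; rewrite /Hh subr0 scale1r scale0r addr0.
- by move=> f _ t _; rewrite /Hh subrr scale0r add0r scale1r.
- move=> k sigma tau hs ht ct cs.
  have ct1 : {within simplex R k `*` simplex R n, continuous (fun ux : 'rV[R]_k.+1 * 'rV[R]_n.+1 => tau ux.1)}.
    apply: (@comp_within _ _ _ _ _ fst tau) => //.
      exact: fst_cont.
    by move=> x [].
  move=> x; apply: cvgD; apply: cvgZ.
  + apply: cvgB; [exact: cvg_cst | exact: ct1].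
  + exact: cs.
  + exact: ct1.
  + have sc : {within simplex R k `*` simplex R n, continuous (fun ux : 'rV[R]_k.+1 * 'rV[R]_n.+1 => ux.2)}.
      exact: continuous_subspaceT (@snd_cont _ _).
    exact: sc x.
Qed.
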